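(* Let $(\mathcal{S},\mathcal{A},\tau,\mu_0,\gamma)$ be fixed and let $\beta>0$. For reward functions $R,R'$, let $Q^{H}_{\beta,R}$ and $Q^{H}_{\beta,R'}$ be the corresponding soft $Q$-functions. Then $Q^{H}_{\beta,R}=Q^{H}_{\beta,R'}$ if and only if $R'$ is produced from $R$ by $S'$-redistribution.
   Context: An MDP is a tuple $(\mathcal{S},\mathcal{A},\tau,\mu_0,R,\gamma)$ with finite $\mathcal{S}$, $\mathcal{A}$, transition dynamics $\tau:\mathcal{S}\times\mathcal{A}\to\Delta(\mathcal{S})$, initial distribution $\mu_0$, deterministic reward $R:\mathcal{S}\times\mathcal{A}\times\mathcal{S}\to\mathbb{R}$, and $\gamma\in(0,1)$. For inverse temperature $\beta>0$, the soft $Q$-function $Q^H_\beta$ is the unique function $\mathcal{S}\times\mathcal{A}\to\mathbb{R}$ satisfying $Q^H_\beta(s,a)=\mathbb{E}_{S'\sim\tau(s,a)}\big[R(s,a,S')+\gamma\frac{1}{\beta}\log\sum_{a'\in\mathcal{A}}\exp(\beta Q^H_\beta(S',a'))\big]$ for all $s,a$. Given $\tau$, $R'$ is produced from $R$ by $S'$-redistribution if $\mathbb{E}_{S'\sim\tau(s,a)}[R(s,a,S')]=\mathbb{E}_{S'\sim\tau(s,a)}[R'(s,a,S')]$ for all $s,a$. *)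

(* Defs.v *)
From HB Require Import structures.
From mathcomp Require Import all_boot all_order all_algebra.
From mathcomp Require Import all_classical all_reals all_analysis.
Set Implicit Arguments. Unset Strict Implicit. Unset Printing Implicit Defensive.
Import Order.TTheory GRing.Theory Num.Theory.
Local Open Scope ring_scope.

Section MDP.
Context {R : realType} {S A : finType}.

Definition is_dist (p : S -> R) : Prop :=
  (forall s, 0 <= p s) /\ \sum_(s : S) p s = 1.

(* Soft Bellman equation: Q is the soft Q-function Q^H_beta for reward r,
   i.e. Q(s,a) = E_{S' ~ tau(s,a)} [ r(s,a,S') + gamma * (1/beta) log sum_a' exp(beta Q(S',a')) ]. *)
Definition is_soft_Q (tau : S -> A -> S -> R) (r : S -> A -> S -> R)
    (gamma beta : R) (Q : S -> A -> R) : Prop :=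
  forall s a,
    Q s a = \sum_(s' : S) tau s a s' *
              (r s a s' + gamma * (beta^-1 * ln (\sum_(a' : A) expR (beta * Q s' a')))).

Definition S'_redistribution (tau : S -> A -> S -> R) (r r' : S -> A -> S -> R) : Prop :=
  forall s a, \sum_(s' : S) tau s a s' * r s a s' = \sum_(s' : S) tau s a s' * r' s a s'.

End MDP.

(* Main.v *)
Require Import Defs.
From HB Require Import structures.
From mathcomp Require Import all_boot all_order all_algebra.
From mathcomp Require Import all_classical all_reals all_analysis.
From mathcomp Require Import ring lra.
Import Order.TTheory GRing.Theory Num.Theory.
Local Open Scope ring_scope.

Lemma lse_lip (R : realType) (A : finType) (beta M : R) (f g : A -> R) :
  0 < beta -> 0 <= M -> (forall a, g a <= f a + M) ->
  beta^-1 * ln (\sum_(a : A) expR (beta * g a)) <=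
  beta^-1 * ln (\sum_(a : A) expR (beta * f a)) + M.
Proof.
move=> hb hM hgf.
have [a0 _|A0] := pickP (@predT A); last first.
  have E : forall h : A -> R, \sum_(a : A) expR (beta * h a) = 0.
    by move=> h; apply: big1 => a _; have := A0 a.
  by rewrite !E ln0 // mulr0 add0r.
have pos : forall h : A -> R, 0 < \sum_(a : A) expR (beta * h a).
  move=> h; rewrite (bigD1 a0) //=.
  have h1 := expR_gt0 (beta * h a0).
  have h2 : 0 <= \sum_(i | i != a0) expR (beta * h i).
    by apply: sumr_ge0 => i _; apply/ltW/expR_gt0.
  lra.
have H1 : \sum_(a : A) expR (beta * g a) <= expR (beta * M) * \sum_(a : A) expR (beta * f a).
  rewrite mulr_sumr; apply: ler_sum => a _; rewrite -expRD ler_expR.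
  rewrite -mulrDr ler_pM2l //; by rewrite addrC.
have H2 : ln (\sum_(a : A) expR (beta * g a)) <= beta * M + ln (\sum_(a : A) expR (beta * f a)).
  rewrite -[beta * M]expRK -lnM ?posrE ?expR_gt0 ?pos //.
  by rewrite ler_ln ?posrE ?mulr_gt0 ?expR_gt0 ?pos.
have hbi : 0 < beta^-1 by rewrite invr_gt0.
apply: (le_trans (ler_wpM2l (ltW hbi) H2)).
by rewrite mulrDr mulrA mulVf ?gt_eqF // mul1r addrC.
Qed.

Theorem theorem3p2 (R : realType) (S A : finType)
    (tau : S -> A -> S -> R) (mu0 : S -> R) (gamma beta : R)
    (htau : forall s a, is_dist (tau s a)) (hmu0 : is_dist mu0)
    (hgamma : 0 < gamma < 1) (hbeta : 0 < beta)
    (r r' : S -> A -> S -> R) (Q Q' : S -> A -> R) :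
  is_soft_Q tau r gamma beta Q ->
  is_soft_Q tau r' gamma beta Q' ->
  (Q = Q' <-> S'_redistribution tau r r').
Proof.
move=> hQ hQ'.
set V := fun (Q0 : S -> A -> R) (s : S) => beta^-1 * ln (\sum_(a : A) expR (beta * Q0 s a)).
have split : forall (rr : S -> A -> S -> R) W s a,
  \sum_(s' : S) tau s a s' * (rr s a s' + gamma * W s') =
  \sum_(s' : S) tau s a s' * rr s a s' + gamma * \sum_(s' : S) tau s a s' * W s'.
  move=> rr W s a; rewrite mulr_sumr -big_split /=; apply: eq_bigr => i _; ring.
have eQ : forall s a, Q s a = \sum_(s' : S) tau s a s' * r s a s' + gamma * \sum_(s' : S) tau s a s' * V Q s'.
  by move=> s a; rewrite hQ split.
have eQ' : forall s a, Q' s a = \sum_(s' : S) tau s a s' * r' s a s' + gamma * \sum_(s' : S) tau s a s' * V Q' s'.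
  by move=> s a; rewrite hQ' split.
case/andP: hgamma => g0 g1.
split.
  move=> EQ s a; have h1 := eQ s a; have h2 := eQ' s a; rewrite -EQ in h2; lra.
move=> hred.
set M := \big[Num.max/0]_(p : S * A) `|Q p.1 p.2 - Q' p.1 p.2|.
have M0 : 0 <= M.
  by apply: (big_ind (fun x => 0 <= x)) => // x y hx hy; rewrite le_max hx.
have leM : forall s a, `|Q s a - Q' s a| <= M.
  by move=> s a; rewrite /M (bigD1 (s, a)) //= le_max lexx.
have bigle : forall c, 0 <= c -> (forall s a, `|Q s a - Q' s a| <= c) -> M <= c.
  move=> c c0 hc; apply: (big_ind (fun x => x <= c)) => //.
    by move=> x y hx hy; rewrite ge_max hx hy.
  all: try by case=> s a _; apply: hc.
have VM : forall s, `|V Q s - V Q' s| <= M.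
  move=> s.
  have h1 : V Q' s <= V Q s + M.
    rewrite /V; apply: lse_lip => // a.
    have := leM s a; rewrite ler_norml => /andP [h _]; lra.
  have h2 : V Q s <= V Q' s + M.
    rewrite /V; apply: lse_lip => // a.
    have := leM s a; rewrite ler_norml => /andP [_ h]; lra.
  move: h1 h2; generalize (V Q s) (V Q' s) => x y h1 h2.
  rewrite ler_norml; apply/andP; split; lra.
have key : forall s a, `|Q s a - Q' s a| <= gamma * M.
  move=> s a.
  have -> : Q s a - Q' s a = gamma * \sum_(s' : S) tau s a s' * (V Q s' - V Q' s').
    rewrite eQ eQ' hred.
    have -> : \sum_(s' : S) tau s a s' * (V Q s' - V Q' s') =
      \sum_(s' : S) tau s a s' * V Q s' - \sum_(s' : S) tau s a s' * V Q' s'.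
      by rewrite -sumrB; apply: eq_bigr => i _; ring.
    ring.
  rewrite normrM (ger0_norm (ltW g0)) ler_pM2l //.
  apply: (le_trans (ler_norm_sum _ _ _)).
  have [tpos tsum] := htau s a.
  apply: (@le_trans _ _ (\sum_(s' : S) tau s a s' * M)).
    apply: ler_sum => i _; rewrite normrM ger0_norm //; exact: ler_wpM2l.
  by rewrite -mulr_suml tsum mul1r.
have MgM : M <= gamma * M by apply: bigle => //; apply: mulr_ge0 => //; exact: ltW.
have Mz : M = 0 by nra.
apply/funext => s; apply/funext => a; apply/eqP; rewrite -subr_eq0 -normr_le0 -Mz.
exact: leM.
Qed.
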